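(* Let $F$ be a collection of objects in $\mathbb{R}^d$ with density $\rho$, and let $F'$ be a $t$-shallow minor of $F$. Then $F'$ has density at most $t^{O(d)}\rho$.
   Context: A set of objects $F$ in $\mathbb{R}^d$ (not necessarily convex or connected) has density $\rho$ if any object $o$ (not necessarily in $F$) intersects at most $\rho$ objects of $F$ with diameter at least the diameter of $o$. A set $F'$ is a minor of $F$ if it can be obtained from $F$ by deleting objects and replacing pairs of intersecting objects $f,g$ by their union $f\cup g$; each object $g\in F'$ then corresponds to a cluster $\mathrm{cl}(g)\subseteq F$ with $\bigcup_{h\in\mathrm{cl}(g)}h=g$ (clusters being disjoint). $F'$ is a $t$-shallow minor of $F$ if it is a minor and the intersection graph of each cluster is $t$-shallow, i.e., has a vertex joined to all others by paths of at most $t$ edges. The intersection graph of a set of objects has the objects as vertices, with an edge between two objects if they intersect. *)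

(* Defs.v *)
From HB Require Import structures.
From mathcomp Require Import all_boot all_order all_algebra.
From mathcomp Require Import boolp classical_sets reals constructive_ereal ereal.
Set Implicit Arguments. Unset Strict Implicit. Unset Printing Implicit Defensive.
Import Order.TTheory GRing.Theory Num.Theory.
Local Open Scope classical_set_scope.
Local Open Scope ring_scope.

Section Objects.
Variables (R : realType) (d : nat).

Definition point := 'rV[R]_d.
Definition object := set point.

Definition edist (x y : point) : R :=
  Num.sqrt (\sum_(i < d) (x ord0 i - y ord0 i) ^+ 2).

(* diameter, in the extended reals (-oo for the empty set, +oo if unbounded) *)
Definition diam (o : object) : \bar R :=
  ereal_sup [set r | exists x y, o x /\ o y /\ r = ((edist x y)%:E)].

Definition intersects (f g : object) : Prop := exists x, f x /\ g x.

Definition has_density (F : seq object) (rho : R) : Prop :=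
  forall (o : object) (S : seq 'I_(size F)), uniq S ->
    (forall i, i \in S ->
       intersects o (nth set0 F i) /\ (diam o <= diam (nth set0 F i))%E) ->
    (size S)%:R <= rho.

(* clusters are lists of indices into F; the object of a cluster is the union *)
Definition cl_union (F : seq object) (c : seq nat) : object :=
  [set x | exists i, i \in c /\ nth set0 F i x].

Definition del_at (C : seq (seq nat)) (k : nat) : seq (seq nat) :=
  [seq nth [::] C j | j <- iota 0 (size C) & j != k].

Definition merge_at (C : seq (seq nat)) (k l : nat) : seq (seq nat) :=
  [seq nth [::] C j | j <- iota 0 (size C) & (j != k) && (j != l)]
    ++ [:: nth [::] C k ++ nth [::] C l].

(* minor_clusters F C : the list of clusters C is reachable from the
   singleton clusters of F by deleting objects and replacing pairs of
   intersecting objects by their union *)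
Inductive minor_clusters (F : seq object) : seq (seq nat) -> Prop :=
| minor_init : minor_clusters F [seq [:: i] | i <- iota 0 (size F)]
| minor_del C k : minor_clusters F C -> (k < size C)%N ->
    minor_clusters F (del_at C k)
| minor_merge C k l : minor_clusters F C -> (k < size C)%N -> (l < size C)%N ->
    (k != l)%N -> intersects (cl_union F (nth [::] C k)) (cl_union F (nth [::] C l)) ->
    minor_clusters F (merge_at C k l).

Definition minor_of (F : seq object) (C : seq (seq nat)) : seq object :=
  map (cl_union F) C.

(* the intersection graph of the cluster c (vertices: the objects F_i, i in c)
   is t-shallow: some vertex u is joined to every vertex v by a path of at
   most t edges *)
Definition shallow_cluster (F : seq object) (t : nat) (c : seq nat) : Prop :=
  exists2 u, u \in c & forall v, v \in c ->
    exists p : seq nat, [/\ (size p <= t)%N, last u p = v &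
      forall j, (j < size p)%N ->
        nth 0 p j \in c /\
        intersects (nth set0 F (nth 0 (u :: p) j)) (nth set0 F (nth 0 p j))].

Definition is_shallow_minor (F : seq object) (t : nat) (C : seq (seq nat)) : Prop :=
  minor_clusters F C /\ forall c, c \in C -> shallow_cluster F t c.

End Objects.

(* Main.v *)
Require Import Defs.
From HB Require Import structures.
From mathcomp Require Import all_boot all_order all_algebra.
From mathcomp Require Import boolp classical_sets reals constructive_ereal ereal.
From mathcomp Require Import ring lra zify.
Import Order.TTheory GRing.Theory Num.Theory.
Local Open Scope ring_scope.
Lemma count_split (T U : Type) (f : T -> U) (p : pred U) (q : pred T) (js : seq T) :
  (count p [seq f j | j <- js & q j] + count (fun j => ~~ q j && p (f j)) js
   = count (fun j => p (f j)) js)%N.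
Proof.
elim: js => //= j js IH; case: (q j) => /=; rewrite -IH; case: (p (f j)) => //=.
by rewrite addnS.
Qed.

Lemma count_nth_iota (T : Type) (x0 : T) (p : pred T) (s : seq T) :
  count p s = count (fun j => p (nth x0 s j)) (iota 0 (size s)).
Proof.
by rewrite -{1}(take_size s) -(map_nth_iota0 x0 (leqnn _)) count_map.
Qed.

Lemma minor_disj (R : realType) (d : nat) (F : seq (object R d)) C :
  minor_clusters F C -> forall i, (count (fun c => i \in c) C <= 1)%N.
Proof.
elim => {C} [|C k MC IH Hk|C k l MC IH Hk Hl Hkl _] i.
- rewrite count_map /=.
  have -> : count (fun x => i \in [:: x]) (iota 0 (size F)) = count_mem i (iota 0 (size F)).
    by apply: eq_count => x; rewrite inE eq_sym.
  by rewrite count_uniq_mem ?iota_uniq // leq_b1.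
- apply: leq_trans (IH i); rewrite /del_at.
  rewrite (count_nth_iota _ [::] _ C) -(count_split _ _ (nth [::] C) (fun c => i \in c) (fun j => j != k)).
  exact: leq_addr.
- apply: leq_trans (IH i); rewrite /merge_at count_cat /=.
  rewrite (count_nth_iota _ [::] _ C) -(count_split _ _ (nth [::] C) (fun c => i \in c) (fun j => (j != k) && (j != l))).
  rewrite addn0 leq_add2l.
  case Hi: (i \in nth [::] C k ++ nth [::] C l) => //.
  rewrite lt0n -lt0n -has_count; apply/hasP.
  move: Hi; rewrite mem_cat => /orP [Hi|Hi].
  + by exists k; rewrite ?mem_iota ?Hi ?eqxx //= andbT.
  + by exists l; rewrite ?mem_iota ?Hi ?eqxx ?andbF //= andbT.
Qed.

Lemma disj_nth (C : seq (seq nat)) :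
  (forall i, (count (fun c => i \in c) C <= 1)%N) ->
  forall g g' i, (g < size C)%N -> (g' < size C)%N ->
  i \in nth [::] C g -> i \in nth [::] C g' -> g = g'.
Proof.
move=> H g g' i Hg Hg' Ig Ig'; apply/eqP; apply/negPn/negP => Hne.
have := H i; rewrite (count_nth_iota _ [::] _ C) => H1.
have H2 : (count (predU (pred1 g) (pred1 g')) (iota 0 (size C))
   <= count (fun j => i \in nth [::] C j) (iota 0 (size C)))%N.
  by apply: sub_count => j /orP [] /eqP ->.
have := count_predUI (pred1 g) (pred1 g') (iota 0 (size C)).
have -> : count (predI (pred1 g) (pred1 g')) (iota 0 (size C)) = 0%N.
  apply/eqP; rewrite -leqn0 leqNgt -has_count; apply/hasP => -[j _] /= /andP [/eqP -> /eqP E].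
  by rewrite E eqxx in Hne.
rewrite !count_uniq_mem ?iota_uniq // !mem_iota /= Hg Hg' addn0 => E.
by move: H2; rewrite E => /leq_trans /(_ H1).
Qed.
Section Lattice.
Variable R : realFieldType.
Local Notation h := (2^-1 : R).

Lemma h_ge0 : 0 <= h. Proof. by rewrite invr_ge0 ler0n. Qed.

Lemma geo_sum (q : nat) : \sum_(i < q) h ^+ i = 2 - 2 * h ^+ q.
Proof.
elim: q => [|q IH]; first by rewrite big_ord0 expr0 mulr1 subrr.
rewrite big_ord_recr /= IH exprS; set y := h ^+ q.
by field.
Qed.

Lemma geo_le2 (q : nat) : \sum_(i < q) h ^+ i <= 2.
Proof. by rewrite geo_sum lerBlDr lerDl mulr_ge0 // exprn_ge0 // h_ge0. Qed.

Variable K : nat.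
Hypothesis K0 : (0 < K)%N.
Definition gw (m : nat) : R := h ^+ (m %/ K).

Lemma gw_ge0 m : 0 <= gw m. Proof. by rewrite exprn_ge0 // h_ge0. Qed.

Lemma block_sum (q : nat) : \sum_(0 <= m < q * K) gw m = K%:R * \sum_(i < q) h ^+ i.
Proof.
elim: q => [|q IH]; first by rewrite mul0n big_geq // big_ord0 mulr0.
rewrite (big_cat_nat (n := (q * K)%N)) //=; last by rewrite leq_pmul2r // ltnW.
rewrite IH big_ord_recr /= mulrDr; congr (_ + _).

rewrite -{1}(add0n (q * K)%N) big_addn mulSn addnK.
rewrite (eq_big_nat _ _ (F2 := fun _ => h ^+ q)); last first.
  by move=> i /andP [_ Hi]; rewrite /gw divnDMl // divn_small.
by rewrite sumr_const_nat subn0 mulr_natl.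
Qed.

Lemma gw_sum_le (M : nat) : \sum_(0 <= m < M) gw m <= 2 * K%:R.
Proof.
apply: (@le_trans _ _ (\sum_(0 <= m < (M * K)%N) gw m)).
  rewrite [X in _ <= X](big_cat_nat (n := M)) //=; last by rewrite leq_pmulr.

  by rewrite lerDl sumr_ge0 // => i _; exact: gw_ge0.
rewrite block_sum mulrC ler_pM2r ?geo_le2 // ltr0n //.
Qed.

Lemma box_sum (B : nat) :
  \sum_(j < (B + B).+1) gw `|(j%:Z - B%:Z)%R|%N <= 4 * K%:R.
Proof.
rewrite -(big_mkord xpredT (fun j => gw `|(j%:Z - B%:Z)%R|%N)).
rewrite (big_cat_nat (n := B)) //=; last by rewrite -addnS leq_addr.
have -> : (4 : R) * K%:R = 2 * K%:R + 2 * K%:R.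
  by rewrite -mulrDl -natrD.
apply: lerD.
  rewrite big_nat_rev /= add0n.
  apply: (@le_trans _ _ (\sum_(0 <= i < B) gw i.+1)).
    rewrite le_eqVlt; apply/orP; left; apply/eqP; apply: eq_big_nat => i /andP [_ Hi].
    rewrite distnEr; last by rewrite leq_subr.
    by rewrite subKn.
  apply: (@le_trans _ _ (\sum_(0 <= i < B.+1) gw i)); last exact: gw_sum_le.
  by rewrite big_nat_recl // lerDr gw_ge0.
rewrite -{1}(add0n B) big_addn.
have -> : ((B + B).+1 - B = B.+1)%N by rewrite -addnS addKn.
apply: (@le_trans _ _ (\sum_(0 <= i < B.+1) gw i)); last exact: gw_sum_le.
rewrite le_eqVlt; apply/orP; left; apply/eqP; apply: eq_big_nat => i _.
by rewrite distnEl ?leq_addl // addnK.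
Qed.

End Lattice.

Lemma sq_div_le (K n : nat) : (K ^ 2 * (n %/ K) <= n ^ 2)%N.
Proof.
have H := leq_divM n K.
set q := (n %/ K)%N in H *.
have H2 : ((q * K) ^ 2 <= n ^ 2)%N by rewrite leq_exp2r.
apply: leq_trans H2.
rewrite expnMn mulnC leq_mul2r; apply/orP; right.
by case: (q) => // q'; rewrite expnS leq_pmulr // expn_gt0.
Qed.

Lemma lattice_countR (R : realFieldType) (d K : nat) (L : seq {ffun 'I_d -> int}) :
  (0 < K)%N -> uniq L ->
  (forall u, u \in L -> (\sum_i `|u i| ^ 2 <= d * K ^ 2)%N) ->
  (size L)%:R <= ((8 * K) ^ d)%:R :> R.
Proof.
move=> K0 UL HL.
set B := (d * K ^ 2)%N.
have HB : forall u, u \in L -> forall i, (`|u i| <= B)%N.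
  move=> u Hu i; apply: leq_trans (HL u Hu).
  apply: (@leq_trans (`|u i| ^ 2)).
    by case: (`|u i|)%N => // n; rewrite expnS leq_pmulr // expn_gt0.
  by rewrite (bigD1 i) //= leq_addr.
pose phi (u : {ffun 'I_d -> int}) : {ffun 'I_d -> 'I_(B + B).+1} :=
  [ffun i => inord `|(u i + B%:Z)%R|%N].
have Hphi : forall u, u \in L -> forall i, ((phi u i)%:Z - B%:Z)%R = u i.
  move=> u Hu i; rewrite ffunE inordK.
    have := HB u Hu i; case: (u i) => n /= Hn; first lia.
    rewrite NegzE in Hn *; lia.
  have := HB u Hu i; case: (u i) => n /= Hn; rewrite ?NegzE in Hn *; lia.
have Hinj : {in L &, injective phi}.
  move=> u v Hu Hv E; apply/ffunP => i.
  by rewrite -(Hphi u Hu i) -(Hphi v Hv i) E.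
pose W (v : {ffun 'I_d -> 'I_(B + B).+1}) : R := \prod_i gw R K `|((v i)%:Z - B%:Z)%R|%N.
have W0 : forall v, 0 <= W v by move=> v; apply: prodr_ge0 => i _; exact: gw_ge0.
have Hw : forall u, u \in L -> 1 <= 2 ^+ d * W (phi u).
  move=> u Hu; rewrite /W.
  under eq_bigr => i _ do rewrite Hphi //.
  rewrite /gw prodrXr.
  have Hs : (\sum_i `|u i| %/ K <= d)%N.
    have H1 : (K ^ 2 * \sum_i `|u i| %/ K <= d * K ^ 2)%N.
      apply: leq_trans (HL u Hu); rewrite big_distrr /=.
      by apply: leq_sum => i _; exact: sq_div_le.
    by rewrite mulnC leq_pmul2r ?expn_gt0 ?K0 // in H1.
  apply: (@le_trans _ _ (2 ^+ d * (2^-1) ^+ d)).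
    by rewrite -exprMn divff ?pnatr_eq0 // expr1n.
  rewrite ler_pM2l ?exprn_gt0 ?ltr0n //.
  by apply: ler_wiXn2l => //; rewrite ?invr_ge0 ?ler0n // invf_le1 ?ler1n ?ltr0n.
apply: (@le_trans _ _ (2 ^+ d * \sum_v W v)).
  rewrite -sum1_size natr_sum.
  apply: (@le_trans _ _ (\sum_(u <- L) 2 ^+ d * W (phi u))).
    by rewrite big_seq_cond [X in _ <= X]big_seq_cond; apply: ler_sum => u /andP [Hu _]; exact: Hw.
  rewrite -mulr_sumr ler_pM2l ?exprn_gt0 ?ltr0n //.
  rewrite -(big_map phi xpredT W) big_uniq; last by rewrite map_inj_in_uniq.
  rewrite [X in _ <= X](bigID (fun v => v \in [seq phi i | i <- L])) /= lerDl.
  by apply: sumr_ge0 => v _; exact: W0.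
rewrite /W -(bigA_distr_bigA (fun (i : 'I_d) (j : 'I_(B + B).+1) => gw R K `|(j%:Z - B%:Z)%R|%N)) /=.
rewrite prodr_const card_ord.
apply: (@le_trans _ _ (2 ^+ d * (4 * K%:R) ^+ d)).
  rewrite ler_pM2l ?exprn_gt0 ?ltr0n //; apply: lerXn2r.
  - by rewrite nnegrE; apply: sumr_ge0 => j _; exact: gw_ge0.
  - by rewrite nnegrE mulr_ge0 ?ler0n.
  exact: box_sum.
rewrite -exprMn natrX natrM mulrA (_ : (2:R) * 4 = 8%:R) //.
by rewrite -natrM.
Qed.

Lemma lattice_count (d K : nat) (L : seq {ffun 'I_d -> int}) :
  (0 < K)%N -> uniq L ->
  (forall u, u \in L -> (\sum_i `|u i| ^ 2 <= d * K ^ 2)%N) ->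
  (size L <= (8 * K) ^ d)%N.
Proof.
by move=> K0 UL HL; rewrite -(ler_nat rat) (lattice_countR rat _ _ _ K0 UL HL).
Qed.

Set Implicit Arguments. Unset Strict Implicit.
Section Geo.
Variable R : realType.

Lemma lagrange (n : nat) (a b : 'I_n -> R) :
  \sum_i \sum_j (a i * b j - a j * b i) ^+ 2 =
  2 * ((\sum_i a i ^+ 2) * (\sum_i b i ^+ 2) - (\sum_i a i * b i) ^+ 2).
Proof.
have E1 : (\sum_i a i ^+ 2) * (\sum_i b i ^+ 2) = \sum_i \sum_j a i ^+ 2 * b j ^+ 2.
  by rewrite big_distrl; apply: eq_bigr => i _; rewrite big_distrr.
have E2 : (\sum_i a i ^+ 2) * (\sum_i b i ^+ 2) = \sum_i \sum_j a j ^+ 2 * b i ^+ 2.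
  by rewrite mulrC big_distrl; apply: eq_bigr => i _; rewrite big_distrr; apply: eq_bigr => j _; rewrite mulrC.
have E3 : (\sum_i a i * b i) ^+ 2 = \sum_i \sum_j (a i * b i) * (a j * b j).
  by rewrite expr2 big_distrl; apply: eq_bigr => i _; rewrite big_distrr.
transitivity (\sum_i \sum_j (a i ^+ 2 * b j ^+ 2 + a j ^+ 2 * b i ^+ 2 - 2 * ((a i * b i) * (a j * b j)))).
  by apply: eq_bigr => i _; apply: eq_bigr => j _; ring.
rewrite mulrBr mulr2n mulrDl mul1r.
rewrite {1}E1 E2 E3 [X in _ - X]big_distrr -big_split -sumrB /=; apply: eq_bigr => i _.
rewrite [X in _ - X]big_distrr -big_split -sumrB /=; apply: eq_bigr => j _; ring.
Qed.

Lemma cauchy_schwarz (n : nat) (a b : 'I_n -> R) :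
  \sum_i a i * b i <= Num.sqrt (\sum_i a i ^+ 2) * Num.sqrt (\sum_i b i ^+ 2).
Proof.
have HA : 0 <= \sum_i a i ^+ 2 by apply: sumr_ge0 => i _; exact: sqr_ge0.
have HB : 0 <= \sum_i b i ^+ 2 by apply: sumr_ge0 => i _; exact: sqr_ge0.
rewrite -sqrtrM //.
apply: le_trans (ler_norm _) _.
rewrite -sqrtr_sqr ler_sqrt; last by rewrite mulr_ge0.
have := lagrange a b.
have H0 : 0 <= \sum_i \sum_j (a i * b j - a j * b i) ^+ 2.
  by apply: sumr_ge0 => i _; apply: sumr_ge0 => j _; exact: sqr_ge0.
move=> E; rewrite E in H0.
by rewrite -subr_ge0 -(pmulr_rge0 _ (ltr0Sn R 1)).
Qed.

Lemma minkowski (n : nat) (a b : 'I_n -> R) :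
  Num.sqrt (\sum_i (a i + b i) ^+ 2) <=
  Num.sqrt (\sum_i a i ^+ 2) + Num.sqrt (\sum_i b i ^+ 2).
Proof.
have HA : 0 <= \sum_i a i ^+ 2 by apply: sumr_ge0 => i _; exact: sqr_ge0.
have HB : 0 <= \sum_i b i ^+ 2 by apply: sumr_ge0 => i _; exact: sqr_ge0.
have CS := cauchy_schwarz a b.
have -> : \sum_i (a i + b i) ^+ 2 = \sum_i a i ^+ 2 + \sum_i b i ^+ 2 + 2 * \sum_i a i * b i.
  rewrite -big_split /= big_distrr -big_split /=; apply: eq_bigr => i _; ring.
move: CS HA HB.
move: (\sum_i a i ^+ 2) (\sum_i b i ^+ 2) (\sum_i a i * b i) => A B P CS HA HB.
have HsA : 0 <= Num.sqrt A by exact: sqrtr_ge0.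
have HsB : 0 <= Num.sqrt B by exact: sqrtr_ge0.
rewrite -[X in _ <= X]ger0_norm ?addr_ge0 // -sqrtr_sqr ler_sqrt ?sqr_ge0 //.
have -> : (Num.sqrt A + Num.sqrt B) ^+ 2 = Num.sqrt A ^+ 2 + Num.sqrt B ^+ 2 + 2 * (Num.sqrt A * Num.sqrt B) by ring.
rewrite !sqr_sqrtr //.
by rewrite lerD2l ler_pM2l //; exact: ltr0Sn.
Qed.

End Geo.

Section Edist.
Variables (R : realType) (d : nat).
Implicit Types x y z : Defs.point R d.

Lemma sumsq_ge0 (f : 'I_d -> R) : 0 <= \sum_i f i ^+ 2.
Proof. by apply: sumr_ge0 => i _; exact: sqr_ge0. Qed.

Lemma edist_ge0 x y : 0 <= edist x y.
Proof. exact: sqrtr_ge0. Qed.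

Lemma edist_sqr x y : edist x y ^+ 2 = \sum_i (x ord0 i - y ord0 i) ^+ 2.
Proof. by rewrite sqr_sqrtr // sumsq_ge0. Qed.

Lemma edist_sym x y : edist x y = edist y x.
Proof. by rewrite /edist; congr Num.sqrt; apply: eq_bigr => i _; ring. Qed.

Lemma edist_xx x : edist x x = 0.
Proof. by rewrite /edist big1 ?sqrtr0 // => i _; rewrite subrr expr0n. Qed.

Lemma edist_tri x y z : edist x z <= edist x y + edist y z.
Proof.
rewrite /edist.
have -> : \sum_(i < d) (x ord0 i - z ord0 i) ^+ 2 =
   \sum_(i < d) ((x ord0 i - y ord0 i) + (y ord0 i - z ord0 i)) ^+ 2.
  by apply: eq_bigr => i _; congr (_ ^+ 2); ring.
exact: minkowski.
Qed.

Lemma edist_le x y r : 0 <= r -> \sum_i (x ord0 i - y ord0 i) ^+ 2 <= r ^+ 2 -> edist x y <= r.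
Proof.
move=> r0 H; rewrite /edist -(ger0_norm r0) -sqrtr_sqr ler_sqrt //; exact: sqr_ge0.
Qed.

Lemma coord_le_edist x y i : `|x ord0 i - y ord0 i| <= edist x y.
Proof.
rewrite /edist -sqrtr_sqr ler_sqrt ?sumsq_ge0 //.
by rewrite (bigD1 i) //= lerDl sumr_ge0 // => j _; exact: sqr_ge0.
Qed.

End Edist.


Local Open Scope classical_set_scope.
Section Chains.
Variables (R : realType) (d : nat).
Implicit Types o : object R d.

Definition small (del : R) o := forall x y, o x -> o y -> edist x y <= del.

Lemma diam_ub o x y : o x -> o y -> ((edist x y)%:E <= diam o)%E.
Proof. by move=> Hx Hy; apply: ereal_sup_ubound; exists x, y. Qed.

Lemma diam_le o r : (forall x y, o x -> o y -> edist x y <= r) -> (diam o <= r%:E)%E.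
Proof. by move=> H; apply: ge_ereal_sup => _ [x [y [Hx [Hy ->]]]]; rewrite lee_fin H. Qed.

Lemma small_diam o del : (diam o <= del%:E)%E -> small del o.
Proof.
by move=> H x y Hx Hy; rewrite -lee_fin; apply: le_trans H; exact: diam_ub.
Qed.

Lemma not_small_diam o del : ~ small del o -> (del%:E <= diam o)%E.
Proof.
move=> H; case: (leP (del%:E) (diam o)) => // /ltW Hlt; exfalso; apply: H.
exact: small_diam.
Qed.

Lemma diam_ge0 o x : o x -> (0%:E <= diam o)%E.
Proof. by move=> Hx; have := diam_ub Hx Hx; rewrite edist_xx. Qed.

Lemma fine_diam_ge0 o : 0 <= fine (diam o).
Proof.
case: (pselect (exists x, o x)) => [[x Hx]|Hn].
  have := diam_ge0 Hx; case: (diam o) => //= r; by rewrite lee_fin.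
suff -> : diam o = -oo%E by [].
apply/eqP; rewrite eq_le leNye andbT; apply: ge_ereal_sup => z [x [y [Hx _]]].
by exfalso; apply: Hn; exists x.
Qed.

Variable F : seq (object R d).
Local Notation Fo j := (nth set0 F j).

Definition ie (i j : nat) : bool := `[< intersects (Fo i) (Fo j) >].

Lemma ieP i j : reflect (intersects (Fo i) (Fo j)) (ie i j).
Proof. exact: asboolP. Qed.

Lemma ie_sym i j : ie i j = ie j i.
Proof.
by apply/ieP/ieP => -[x [H1 H2]]; exists x.
Qed.

Lemma chain_small del a q w y :
  path ie a q -> (forall j, j \in a :: q -> small del (Fo j)) ->
  Fo a w -> Fo (last a q) y -> edist w y <= (size q).+1%:R * del.
Proof.
elim: q a w => [|b q IH] a w /=.
  by move=> _ Hs Hw Hy; rewrite mul1r; apply: (Hs a) => //; rewrite inE eqxx.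
move=> /andP [/ieP [w' [Hw'a Hw'b]] Hp] Hs Hw Hy.
apply: (le_trans (edist_tri w w' y)).
rewrite [_.+1%:R]mulrS mulrDl mul1r; apply: lerD.
  by apply: (Hs a) => //; rewrite inE eqxx.
apply: (IH b w') => // j Hj; apply: Hs; by rewrite inE Hj orbT.
Qed.

Lemma first_big del a q w :
  0 <= del -> path ie a q -> Fo a w -> ~ small del (Fo (last a q)) ->
  exists h, [/\ h \in a :: q, ~ small del (Fo h) &
    exists z, Fo h z /\ edist w z <= (size q)%:R * del].
Proof.
move=> del0; elim: q a w => [|b q IH] a w /=.
  move=> _ Hw Hns; exists a; split => //; first by rewrite inE eqxx.
  by exists w; split => //; rewrite edist_xx mul0r.
move=> /andP [/ieP [w' [Hw'a Hw'b]] Hp] Hw Hns.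
case: (pselect (small del (Fo a))) => Hsa; last first.
  exists a; split => //; first by rewrite inE eqxx.
  by exists w; split => //; rewrite edist_xx mulr_ge0 ?ler0n.
have [h [Hh Hhs [z [Hz Hd]]]] := IH b w' Hp Hw'b Hns.
exists h; split => //; first by rewrite inE Hh orbT.
exists z; split => //.
apply: (le_trans (edist_tri w w' z)).
rewrite mulrS mulrDl mul1r; apply: lerD => //.
exact: (Hsa w w').
Qed.

Lemma last_rev_belast (u : nat) p : last (last u p) (rev (belast u p)) = u.
Proof. by case: p => //= x p; rewrite rev_cons last_rcons. Qed.

Lemma shallow_walk t c a b :
  shallow_cluster F t c -> a \in c -> b \in c ->
  exists q, [/\ path ie a q, last a q = b, (size q <= t + t)%N &
     forall j, j \in a :: q -> j \in c].
Proof.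
move=> [u Hu Hpath] Ha Hb.
have getp : forall v, v \in c -> exists p, [/\ path ie u p, last u p = v,
    (size p <= t)%N & forall j, j \in u :: p -> j \in c].
  move=> v Hv; have [p [Hs Hl Hn]] := Hpath v Hv.
  exists p; split => //.
    by apply/(pathP 0) => i Hi; apply/ieP; case: (Hn i Hi).
  move=> j; rewrite inE => /orP [/eqP -> //|Hj].
  by have [i Hi <-] := nthP 0 Hj; case: (Hn i Hi).
have [pa [Pa La Sa Ca]] := getp a Ha.
have [pb [Pb Lb Sb Cb]] := getp b Hb.
exists (rev (belast u pa) ++ pb); split.
- rewrite cat_path -La rev_path last_rev_belast Pb andbT.
  by rewrite (eq_path (e' := ie)) // => x y; rewrite /= ie_sym.
- by rewrite last_cat -La last_rev_belast.
- by rewrite size_cat size_rev size_belast leq_add.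
- move=> j; rewrite inE mem_cat mem_rev => /orP [/eqP ->|/orP [Hj|Hj]] //.
  + by apply: Ca; apply: mem_belast Hj.
  + by apply: Cb; rewrite inE Hj orbT.
Qed.

Lemma cluster_small t c del :
  shallow_cluster F t c -> (forall j, j \in c -> small del (Fo j)) ->
  small ((t + t).+1%:R * del) (cl_union F c).
Proof.
move=> Hsh Hs x y [a [Ha Hx]] [b [Hb Hy]].
have [q [Pq Lq Sq Cq]] := shallow_walk Hsh Ha Hb.
have del0 : 0 <= del.
  have := Hs a Ha x x Hx Hx; rewrite edist_xx //.
apply: le_trans (chain_small Pq _ Hx _) _.
- by move=> j Hj; apply: Hs; apply: Cq.
- by rewrite Lq.
by rewrite ler_wpM2r // ler_nat ltnS.
Qed.

Lemma cluster_find t c del a y0 :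
  shallow_cluster F t c -> 0 <= del -> (exists2 b, b \in c & ~ small del (Fo b)) ->
  a \in c -> Fo a y0 ->
  exists h, [/\ h \in c, ~ small del (Fo h) &
    exists z, Fo h z /\ edist y0 z <= (t + t)%:R * del].
Proof.
move=> Hsh del0 [b Hb Hnb] Ha Hy0.
have [q [Pq Lq Sq Cq]] := shallow_walk Hsh Ha Hb.
have Hnb' : ~ small del (nth set0 F (last a q)) by rewrite Lq.
have [h [Hh Hhs [z [Hz Hd]]]] := first_big del0 Pq Hy0 Hnb'.
exists h; split => //; first exact: Cq.
exists z; split => //; apply: le_trans Hd _.
by rewrite ler_wpM2r // ler_nat.
Qed.

End Chains.


Lemma nonempty_of_intersects (R : realType) (d : nat) (o f : object R d) :
  intersects o f -> exists x, f x.
Proof. by move=> [x [_ H]]; exists x. Qed.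

Lemma dens_apply (R : realType) (d : nat) (F : seq (object R d)) rho (o : object R d) (L : seq nat) :
  has_density F rho -> uniq L ->
  (forall i, i \in L -> intersects o (nth set0 F i) /\ (diam o <= diam (nth set0 F i))%E) ->
  (size L)%:R <= rho.
Proof.
move=> Hd UL HL.
have Hlt : forall i, i \in L -> (i < size F)%N.
  move=> i Hi; rewrite ltnNge; apply/negP => Hge.
  have [[x [_ Hx]] _] := HL i Hi; move: Hx; by rewrite nth_default.
pose S := pmap (insub : nat -> option 'I_(size F)) L.
have -> : size L = size S.
  by rewrite size_pmap_sub; apply/esym/eqP; rewrite -all_count; apply/allP => i /Hlt.
apply: (Hd o S); first exact: pmap_sub_uniq.
by move=> i; rewrite mem_pmap_sub => /HL.
Qed.

Lemma sum_count_keys (T U : eqType) (key : T -> U) (s : seq T) (ks : seq U) :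
  uniq ks -> (forall x, x \in s -> key x \in ks) ->
  (\sum_(k <- ks) count (fun x => key x == k) s)%N = size s.
Proof.
move=> Uks; elim: s => [|x s IH] Hs /=; first by rewrite big1.
rewrite big_split /= IH; last by move=> y Hy; apply: Hs; rewrite inE Hy orbT.
rewrite -add1n; congr (_ + _)%N.
have Hx : key x \in ks by apply: Hs; rewrite inE eqxx.
rewrite (big_rem (key x)) //= eqxx -[RHS]addn0; congr (_ + _)%N.
rewrite big_seq big1 // => k Hk; apply/eqP; rewrite eqb0; apply/eqP => E.
move: Hk; rewrite -E; move: Uks; rewrite (perm_uniq (perm_to_rem Hx)) /= => /andP [H _].
by move/negP: H.
Qed.

Lemma exists_m (d : nat) : exists m : nat, [/\ (0 < m)%N, (d <= m ^ 2)%N & (d = 0 \/ m ^ 2 <= 4 * d)%N].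
Proof.
case: d => [|d]; first by exists 1%N; split => //; left.
have ex : exists m, (d.+1 <= m ^ 2)%N by exists d.+1; rewrite expnS expn1 leq_pmulr.
pose m := ex_minn ex.
have Hm : (d.+1 <= m ^ 2)%N by rewrite /m; case: ex_minnP.
have Hmin : forall k, (d.+1 <= k ^ 2)%N -> (m <= k)%N by rewrite /m; case: ex_minnP.
exists m; split => //.
  by case: (m) Hm => //.
right.
case: m Hm Hmin => [//|[|m]] Hm Hmin; first by lia.
have H2 : ~~ (d.+1 <= m.+1 ^ 2)%N.
  by apply/negP => /Hmin; rewrite ltnn.
rewrite -ltnNge in H2.
nia.
Qed.

Lemma const_bound (t : nat) : (8 * (12 * t.+1) <= (t + 2) ^ 8)%N.
Proof.
have H : (2 ^ 7 <= (t + 2) ^ 7)%N by rewrite leq_exp2r // leq_addl.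
rewrite expnS mulnC.
apply: (@leq_trans ((t + 2) * 2 ^ 7)); last by rewrite leq_mul2l H orbT.
rewrite (_ : 2 ^ 7 = 128)%N //; lia.
Qed.

Lemma floor_abs_sq (R : realType) (v : R) : (`|Num.floor v|%:R) ^+ 2 <= 2 * v ^+ 2 + 2 :> R.
Proof.
have /andP [H1 H2] := floor_itv v.
rewrite intrD (_ : (1:int)%:~R = 1 :> R) // in H2.
rewrite natr_absz intr_norm real_normK; last exact: num_real.
move: H1 H2; set U := (Num.floor v)%:~R => H1 H2.
have h1 : (U - v) ^+ 2 <= 1.
  have ha : 0 <= v - U by rewrite subr_ge0.
  have hb : v - U <= 1 by rewrite lerBlDl ltW // addrC.
  rewrite -sqrrN opprB expr2 -[1 in X in _ <= X](mulr1 1).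
  apply: ler_pM => //.
have h2 := sqr_ge0 (U - 2 * v).
nra.
Qed.

Lemma floor_diff_sq (R : realType) (v v' : R) : Num.floor v = Num.floor v' -> (v - v') ^+ 2 <= 1.
Proof.
move=> E.
have /andP [H1 H2] := floor_itv v.
have /andP [H3 H4] := floor_itv v'.
rewrite !intrD in H2 H4; rewrite (_ : (1:int)%:~R = 1 :> R) // in H2 H4; rewrite E in H1 H2.
move: H1 H2 H3 H4; set U := (Num.floor v')%:~R => H1 H2 H3 H4.
have ha : `|v - v'| <= 1.
  rewrite ler_norml; apply/andP; split; lra.
rewrite -real_normK ?num_real // expr2 -[1 in X in _ <= X](mulr1 1).
by apply: ler_pM.
Qed.

Lemma nat_bound (t m d : nat) : (m ^ 2 <= 4 * d)%N -> (8 * (t + t + 2) ^ 2 * m ^ 2 + 2 * d <= d * (12 * t.+1) ^ 2)%N.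
Proof.
move=> H.
have E1 : (8 * (t + t + 2) ^ 2 * m ^ 2 = 32 * (t.+1 ^ 2 * m ^ 2))%N.
  ring.
have E2 : (d * (12 * t.+1) ^ 2 = 144 * (t.+1 ^ 2 * d))%N.
  ring.
rewrite E1 E2.
have H1 : (t.+1 ^ 2 * m ^ 2 <= t.+1 ^ 2 * (4 * d))%N by rewrite leq_mul2l H orbT.
have H2 : (1 <= t.+1 ^ 2)%N by rewrite expn_gt0.
move: H1 H2; move: (t.+1 ^ 2)%N (m ^ 2)%N => X Y H1 H2.
nia.
Qed.

Local Close Scope classical_set_scope.

Theorem mainTheorem9 :
  exists c : nat, forall (R : realType) (d t : nat) (rho : R)
    (F : seq (object R d)) (C : seq (seq nat)),
    has_density F rho -> is_shallow_minor F t C ->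
    has_density (minor_of F C) (((t + 2) ^ (c * d))%:R * rho).
Proof.
exists 8%N => R d t rho F C Hd [Hmin Hsh] o S' US' HS'.
pose L := [seq val g | g <- S'].
have HL : forall g, g \in L -> [/\ (g < size C)%N,
    intersects o (cl_union F (nth [::] C g)) &
    (diam o <= diam (cl_union F (nth [::] C g)))%E].
  move=> g /mapP [g' Hg' ->].
  have Hlt : (g' < size C)%N.
    have H := ltn_ord g'; have E : size (minor_of F C) = size C by rewrite size_map.
    by move: H; generalize (nat_of_ord g'); rewrite E.
  have [H1 H2] := HS' g' Hg'.
  by rewrite (nth_map [::]) // in H1 H2.
have UL : uniq L by rewrite map_inj_uniq //; exact: val_inj.
have -> : size S' = size L by rewrite [RHS]size_map.
have HshL : forall g, g \in L -> shallow_cluster F t (nth [::] C g).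
  by move=> g Hg; apply: Hsh; apply: mem_nth; case: (HL g Hg).
have Hdisj := disj_nth _ (minor_disj _ _ _ _ Hmin).
have rho0 : 0 <= rho.
  by have := Hd set0 [::] isT (fun i (H : i \in [::]) => ltac:(by rewrite in_nil in H)).
have M1 : (1 <= ((t + 2) ^ (8 * d))%:R :> R) by rewrite ler1n expn_gt0 addn2.
have fin : forall N : nat, (N <= (t + 2) ^ (8 * d))%N -> (size L)%:R <= N%:R * rho ->
    (size L)%:R <= ((t + 2) ^ (8 * d))%:R * rho.
  by move=> N HN H; apply: (le_trans H); rewrite ler_wpM2r // ler_nat.
have pick_apply : forall o' : object R d,
    (forall g, g \in L -> exists b, b \in nth [::] C g /\
       intersects o' (nth set0 F b) /\ (diam o' <= diam (nth set0 F b))%E) ->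
    (size L)%:R <= rho.
  move=> o' Hex.
  have Hex' : forall g, exists b, g \in L -> b \in nth [::] C g /\
       intersects o' (nth set0 F b) /\ (diam o' <= diam (nth set0 F b))%E.
    move=> g; case: (boolP (g \in L)) => Hg; last by exists 0%N.
    by have [b Hb] := Hex g Hg; exists b.
  have [f Hf] := choice Hex'.
  rewrite -(size_map f); apply: (dens_apply (o := o') Hd).
    rewrite map_inj_in_uniq // => g g' Hg Hg' E.
    have [Hb _] := Hf g Hg; have [Hb' _] := Hf g' Hg'.
    rewrite -E in Hb'.
    by apply: (Hdisj g g' (f g)) => //; [case: (HL g Hg)|case: (HL g' Hg')].
  by move=> i /mapP [g Hg ->]; case: (Hf g Hg).
case: L HL UL HshL pick_apply fin => [|g0 L'] HL UL HshL pick_apply fin.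
  by rewrite mulr_ge0 // ler0n.
set L := g0 :: L' in HL UL HshL pick_apply fin *.
have [_ [x0 [Hx0o _]] _] := HL g0 (mem_head _ _).
case Eo: (diam o) => [D| |].
- have D0 : 0 <= D by have := diam_ge0 Hx0o; rewrite Eo lee_fin.
  case: (leP D 0) => [Dle0|Dpos].
    apply: (fin 1%N); first by rewrite expn_gt0 addn2.
    rewrite mul1r; apply: (pick_apply o) => g Hg.
    have [Hg1 [y [Hyo [a [Ha Hya]]]] Hg3] := HL g Hg.
    exists a; split => //; split; first by exists y.
    by rewrite Eo; apply: le_trans (diam_ge0 Hya); rewrite lee_fin.
  pose T : R := (t + t + 2)%:R.
  have T0 : 0 < T by rewrite ltr0n addn2.
  pose del := D / T.
  have del0 : 0 < del by rewrite divr_gt0.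
  have Hdel1 : (t + t).+1%:R * del < D.
    rewrite /del mulrA ltr_pdivrMr // mulrC ltr_pM2l // ltr_nat.
    by rewrite addn2.
  have Hdel2 : (t + t)%:R * del <= D.
    rewrite /del mulrA ler_pdivrMr // mulrC ler_pM2l // ler_nat.
    by rewrite addn2 leqW.
  have Hex : forall g, exists p : nat * Defs.point R d, g \in L ->
     [/\ p.1 \in nth [::] C g, ~ small del (nth set0 F p.1),
         nth set0 F p.1 p.2 & edist x0 p.2 <= D + D].
    move=> g; case: (boolP (g \in L)) => Hg; last by exists (0%N, x0).
    have [Hg1 [y0 [Hy0o [a [Ha Hy0a]]]] Hg3] := HL g Hg.
    have Hbig : exists2 b, b \in nth [::] C g & ~ small del (nth set0 F b).
      case: (pselect (exists2 b, b \in nth [::] C g & ~ small del (nth set0 F b))) => // Hno.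
      exfalso.
      have Hs : forall j, j \in nth [::] C g -> small del (nth set0 F j).
        move=> j Hj; case: (pselect (small del (nth set0 F j))) => // Hn.
        by exfalso; apply: Hno; exists j.
      have := cluster_small (HshL g Hg) Hs.
      move/(@diam_le _ _ (cl_union F (nth [::] C g))).
      move/(le_trans Hg3); rewrite Eo lee_fin => H.
      by move: (lt_le_trans Hdel1 H); rewrite ltxx.
    have [h [Hh Hhs [z [Hz Hdz]]]] := cluster_find (HshL g Hg) (ltW del0) Hbig Ha Hy0a.
    exists (h, z) => _; split => //=.
    apply: (le_trans (edist_tri x0 y0 z)); apply: lerD.
      by rewrite -lee_fin -Eo; exact: diam_ub.
    exact: le_trans Hdz Hdel2.
  have [f Hf] := choice Hex.
  have [m [m0 Hdm Hm4]] := exists_m d.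
  pose s := del / m%:R.
  have s0 : 0 < s by rewrite divr_gt0 // ltr0n.
  pose key g : {ffun 'I_d -> int} :=
    [ffun k => Num.floor (((f g).2 ord0 k - x0 ord0 k) / s)].
  pose cell (u : {ffun 'I_d -> int}) : object R d :=
    fun y => forall k, Num.floor ((y ord0 k - x0 ord0 k) / s) = u k.
  pose ks := undup (map key L).
  pose K := (12 * t.+1)%N.
  have Hkey : forall g, g \in L -> (\sum_k `|key g k| ^ 2 <= d * K ^ 2)%N.
    move=> g Hg.
    case: Hm4 => [d0|Hm4].
      by rewrite big1 // => k _; exfalso; have := ltn_ord k; move: (nat_of_ord k); rewrite d0.
    have [_ _ _ Hz] := Hf g Hg.
    pose a k := (f g).2 ord0 k - x0 ord0 k.
    have Ha : \sum_k a k ^+ 2 <= (D + D) ^+ 2.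
      rewrite -edist_sqr edist_sym lerXn2r // nnegrE ?edist_ge0 //.
      by rewrite addr_ge0.
    have s2 : s ^+ 2 != 0 by rewrite expf_neq0 // gt_eqF.
    have E1 : \sum_k (2 * (a k / s) ^+ 2 + 2) = 2 / s ^+ 2 * \sum_k a k ^+ 2 + 2 * d%:R.
      rewrite big_split /= sumr_const card_ord mulr_sumr mulr_natr; congr (_ + _).
      by apply: eq_bigr => k _; rewrite expr_div_n mulrA mulrAC.
    have E2 : 2 / s ^+ 2 * (D + D) ^+ 2 = 8 * T ^+ 2 * (m%:R) ^+ 2.
      rewrite /s /del; field.
      have Tp : 0 < t%:R + t%:R + 2 :> R by have := ler0n R t; lra.
      by rewrite pnatr_eq0 -lt0n m0 (gt_eqF Tp) (gt_eqF Dpos).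
    rewrite -(ler_nat R) natr_sum.
    apply: (@le_trans _ _ (\sum_k (2 * (a k / s) ^+ 2 + 2))).
      apply: ler_sum => k _; rewrite natrX /key ffunE; exact: floor_abs_sq.
    rewrite E1.
    apply: (@le_trans _ _ (8 * T ^+ 2 * (m%:R) ^+ 2 + 2 * d%:R)).
      rewrite lerD2r -E2 ler_pM2l //; rewrite divr_gt0 // exprn_gt0 //.
    have Hn : (8 * (t + t + 2) ^ 2 * m ^ 2 + 2 * d <= d * K ^ 2)%N.
      rewrite /K; exact: nat_bound.
    rewrite -(ler_nat R) in Hn; apply: le_trans Hn.
    by rewrite natrD !natrM /T !expr2.
  have Hks : (size ks <= (8 * K) ^ d)%N.
    apply: lattice_count; [by rewrite muln_gt0 | exact: undup_uniq |].
    by move=> u; rewrite mem_undup => /mapP [g Hg ->]; exact: Hkey g Hg.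
  have Hcell : forall u, (diam (cell u) <= del%:E)%E.
    move=> u; apply: diam_le => y y' Hy Hy'.
    apply: edist_le; first exact: ltW.
    have Hk : forall k, (y ord0 k - y' ord0 k) ^+ 2 <= s ^+ 2.
      move=> k.
      have E : Num.floor ((y ord0 k - x0 ord0 k) / s) = Num.floor ((y' ord0 k - x0 ord0 k) / s).
        by rewrite Hy Hy'.
      have := floor_diff_sq E.
      have -> : (y ord0 k - x0 ord0 k) / s - (y' ord0 k - x0 ord0 k) / s = (y ord0 k - y' ord0 k) / s.
        by rewrite -mulrBl; congr (_ * _); ring.
      by rewrite expr_div_n ler_pdivrMr ?exprn_gt0 // mul1r.
    apply: (@le_trans _ _ (\sum_(k < d) s ^+ 2)); first by apply: ler_sum => k _; exact: Hk.
    rewrite sumr_const card_ord -mulr_natr /s expr_div_n mulrAC.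
    rewrite ler_pdivrMr ?exprn_gt0 ?ltr0n // ler_pM2l ?exprn_gt0 //.
    by rewrite -natrX ler_nat.
  have Hcnt : forall u, (count (fun g => key g == u) L)%:R <= rho.
    move=> u; rewrite -size_filter -(size_map (fun g => (f g).1)).
    apply: (dens_apply (o := cell u) Hd).
    - rewrite map_inj_in_uniq ?filter_uniq // => g g' Hg Hg' E.
      move: Hg Hg'; rewrite !mem_filter => /andP [_ Hg] /andP [_ Hg'].
      have [Hb _ _ _] := Hf g Hg; have [Hb' _ _ _] := Hf g' Hg'.
      rewrite -E in Hb'.
      by apply: (Hdisj g g' (f g).1) => //; [case: (HL g Hg)|case: (HL g' Hg')].
    - move=> i /mapP [g]; rewrite mem_filter => /andP [/eqP Eu Hg] ->.
      have [_ Hns Hz _] := Hf g Hg.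
      split.
        exists (f g).2; split => //.
        by move=> k; rewrite -Eu /key ffunE.
      apply: le_trans (Hcell u) _; exact: not_small_diam.
  have Hpow : ((8 * K) ^ d <= (t + 2) ^ (8 * d))%N.
    rewrite expnM; case: (d) => [//|d']; rewrite leq_exp2r //; exact: const_bound.
  apply: (fin (size ks)); first exact: leq_trans Hks Hpow.
  rewrite -(sum_count_keys (key := key) (s := L) (ks := ks)) //; last first.
    by move=> g Hg; rewrite mem_undup; apply: map_f.
  1: exact: undup_uniq.
  rewrite natr_sum.
  apply: (@le_trans _ _ (\sum_(k <- ks) rho)); first by apply: ler_sum => k _; exact: Hcnt.
  rewrite le_eqVlt; apply/orP; left; apply/eqP.
  by rewrite -sum1_size natr_sum mulr_suml; apply: eq_bigr => k _; rewrite mul1r.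

-
  apply: (fin 1%N); first by rewrite expn_gt0 addn2.
  rewrite mul1r; apply: (pick_apply setT) => g Hg.
  have [Hg1 Hg2 Hg3] := HL g Hg.
  suff [b Hb Eb] : exists2 b, b \in nth [::] C g & diam (nth set0 F b) = +oo%E.
    exists b; split => //; split; last by rewrite Eb leey.
    case: (pselect (exists x, nth set0 F b x)) => [[x Hx]|Hn].
      by exists x.
    exfalso; have : (diam (nth set0 F b) <= 0%:E)%E.
      by apply: diam_le => x y Hx; exfalso; apply: Hn; exists x.
    by rewrite Eb.
  case: (pselect (exists2 b, b \in nth [::] C g & diam (nth set0 F b) = +oo%E)) => // Hno.
  exfalso.
  set c := nth [::] C g in Hg2 Hg3 Hno *.
  pose d0 := \sum_(j <- c) fine (diam (nth set0 F j)).
  have Hs : forall j, j \in c -> small d0 (nth set0 F j).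
    move=> j Hj; apply: small_diam.
    apply: (@le_trans _ _ (fine (diam (nth set0 F j)))%:E).
      case E: (diam (nth set0 F j)) => [r| |] //=; last exact: leNye.
      by exfalso; apply: Hno; exists j.
    rewrite lee_fin /d0 (big_rem j) //= lerDl.
    by apply: sumr_ge0 => k _; exact: fine_diam_ge0.
  have := cluster_small (HshL g Hg) Hs.
  move/(@diam_le _ _ (cl_union F c)).
  by move/(le_trans Hg3); rewrite Eo.
- by exfalso; have := diam_ge0 Hx0o; rewrite Eo.
Qed.
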